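(* Consider the system $x_{k+1}=F(x_k,u_k,w_k,v_k)$, $y_k=H(x_k,u_k,w_k,v_k)$ with $x_k\in\mathbb{X}$, $u_k\in\mathbb{U}$, $w_k\in\mathbb{W}$, $v_k\in\mathbb{V}$, $y_k\in\mathbb{Y}$. For pairs of trajectories $(\boldsymbol{x},\boldsymbol{u},\boldsymbol{w},\boldsymbol{v},\boldsymbol{y})$, $(\widetilde{\boldsymbol{x}},\boldsymbol{u},\widetilde{\boldsymbol{w}},\widetilde{\boldsymbol{v}},\widetilde{\boldsymbol{y}})$ write $\delta x_k=x_k-\widetilde{x}_k$, $\delta v_k=v_k-\widetilde{v}_k$, $\delta y_k=y_k-\widetilde{y}_k$. There exist $\gamma_0\in\mathcal{KL}$ and $\gamma_v,\gamma_y\in\mathcal{K}$ such that $$\|\delta x_k\|\le\max\big(\gamma_0(\|\delta x_0\|,k),\ \gamma_v(\|\delta\boldsymbol{v}\|_{[0,k-1]}),\ \gamma_y(\|\delta\boldsymbol{y}\|_{[0,k-1]})\big)$$ for all $k\ge0$ and all such pairs of trajectories, if and only if there exist $\overline{\gamma}_0,\overline{\gamma}_v,\overline{\gamma}_y\in\mathcal{KL}$ such that $$\|\delta x_k\|\le\max\Big(\max_{j\in\{0,\dots,k-1\}}\overline{\gamma}_v(\|\delta v_j\|,k-j-1),\ \overline{\gamma}_0(\|\delta x_0\|,k),\ \max_{j\in\{0,\dots,k-1\}}\overline{\gamma}_y(\|\delta y_j\|,k-j-1)\Big)$$ for all $k\ge0$ and all such pairs of trajectories.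
   Context: $\|\boldsymbol{x}\|_{[a,b]}:=\max_{i\in\{a,\dots,b\}}\|x_i\|$. $\mathcal{K}$ and $\mathcal{KL}$ are the usual comparison function classes: $\alpha\in\mathcal{K}$ if continuous, strictly increasing, $\alpha(0)=0$; $\beta\in\mathcal{KL}$ if $\beta(\cdot,k)\in\mathcal{K}$ for each $k$ and $\beta(r,\cdot)$ is non-increasing with limit $0$. A trajectory is a sequence satisfying the system equations for all $k$. *)

(* Defs.v *)
From HB Require Import structures.
From mathcomp Require Import all_boot all_order all_algebra.
From mathcomp Require Import all_classical all_reals all_analysis.
Set Implicit Arguments. Unset Strict Implicit. Unset Printing Implicit Defensive.
Import Order.TTheory GRing.Theory Num.Theory.
Import numFieldNormedType.Exports.
Local Open Scope classical_set_scope.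
Local Open Scope ring_scope.

Definition classK {R : realType} (a : R -> R) : Prop :=
  [/\ {within [set r : R | 0 <= r], continuous a},
      (forall r s : R, 0 <= r -> r < s -> a r < a s) &
      a 0 = 0].

Definition classKL {R : realType} (b : R -> nat -> R) : Prop :=
  [/\ (forall k : nat, classK (fun r => b r k)),
      (forall r : R, 0 <= r -> forall k : nat, b r k.+1 <= b r k) &
      (forall r : R, 0 <= r -> (fun k => b r k) @ \oo --> (0 : R))].

(* ||z||_[0, k-1] = max_{i in {0..k-1}} ||z_i||  (= 0 when k = 0) *)
Definition supnorm {R : realType} {Z : normedModType R} (z : nat -> Z) (k : nat) : R :=
  \big[Num.max/0]_(i < k) `|z i|.

Definition is_traj {X U W V Y : Type}
  (XX : set X) (UU : set U) (WW : set W) (VV : set V) (YY : set Y)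
  (F : X -> U -> W -> V -> X) (H : X -> U -> W -> V -> Y)
  (x : nat -> X) (u : nat -> U) (w : nat -> W) (v : nat -> V) (y : nat -> Y) : Prop :=
  forall k : nat,
    [/\ XX (x k), UU (u k), WW (w k), VV (v k) & YY (y k)] /\
    x k.+1 = F (x k) (u k) (w k) (v k) /\
    y k = H (x k) (u k) (w k) (v k).

(* Main.v *)
Require Import Defs.
From HB Require Import structures.
From mathcomp Require Import all_boot all_order all_algebra.
From mathcomp Require Import all_classical all_reals all_analysis.
From mathcomp Require Import ring lra zify.
Import Order.TTheory GRing.Theory Num.Theory.
Import numFieldNormedType.Exports.
Local Open Scope classical_set_scope.
Local Open Scope ring_scope.
Set Implicit Arguments. Unset Strict Implicit.

Definition nmin (P : nat -> Prop) : nat :=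
  match pselect (exists n, P n) with
  | left h => ex_minn (P := fun n => `[< P n >]) (let: ex_intro n Pn := h in ex_intro _ n (asboolT Pn))
  | right _ => 0%N
  end.

Lemma nminP (P : nat -> Prop) : (exists n, P n) -> P (nmin P) /\ forall n, P n -> (nmin P <= n)%N.
Proof.
move=> ex; rewrite /nmin; case: pselect => // h.
case: ex_minnP => m /asboolP Pm mmin; split => // n Pn; apply: mmin; exact/asboolP.
Qed.

Lemma K_lt {R : realType} (a : R -> R) r s : classK a -> 0 <= r -> r < s -> a r < a s.
Proof. by case=> _ H _; apply: H. Qed.

Lemma K_mono {R : realType} (a : R -> R) r s : classK a -> 0 <= r -> r <= s -> a r <= a s.
Proof.
move=> Ka r0 /[dup] rs; rewrite le_eqVlt => /orP[/eqP->//|{}rs].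
exact: ltW (K_lt Ka r0 rs).
Qed.

Lemma K_ge0 {R : realType} (a : R -> R) r : classK a -> 0 <= r -> 0 <= a r.
Proof. move=> Ka r0; have := K_mono Ka (lexx 0) r0; by case: Ka => _ _ ->. Qed.

Lemma KL_K {R : realType} (b : R -> nat -> R) n : classKL b -> classK (fun r => b r n).
Proof. by case. Qed.

Lemma KL_dec {R : realType} (b : R -> nat -> R) r m n : classKL b -> 0 <= r ->
  (m <= n)%N -> b r n <= b r m.
Proof.
move=> [_ H _] r0; elim: n => [|n IH]; first by rewrite leqn0 => /eqP->.
rewrite leq_eqVlt => /orP[/eqP->//|]; rewrite ltnS => /IH; apply: le_trans; exact: H.
Qed.

Lemma KL_ex {R : realType} (b : R -> nat -> R) r c : classKL b -> 0 <= r -> 0 < c ->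
  exists n, b r n <= c.
Proof.
move=> [_ _ H] r0 c0; have /cvgr0_norm_lt/(_ c c0) := H r r0.
case=> N _ HN; exists N; have := HN N (leqnn N) => /= h.
exact/ltW/(le_lt_trans (ler_norm _) h).
Qed.
Definition Nb {R : realType} (b : R -> nat -> R) (y : R) : nat :=
  nmin (fun n => b (8 * y) n <= y / 2).
Definition n0 {R : realType} (b : R -> nat -> R) (L : R) : nat :=
  nmin (fun n => b (8 * L) n <= L).
Definition hb {R : realType} (b : R -> nat -> R) (s : R) : R :=
  s / (4 * (Nb b s).+1%:R).
Definition Eb {R : realType} (b : R -> nat -> R) (r : R) : set R :=
  [set hb b s + `|r - s| / 2 | s in [set s : R | 0 <= s]].
Definition eps {R : realType} (b : R -> nat -> R) (r : R) : R := inf (Eb b r).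
Definition rho {R : realType} (b : R -> nat -> R) (r : R) : R := r - eps b r.

Lemma hb_ge0 {R : realType} (b : R -> nat -> R) s : 0 <= s -> 0 <= hb b s.
Proof. by move=> s0; rewrite /hb divr_ge0 // mulr_ge0. Qed.

Lemma hb_le {R : realType} (b : R -> nat -> R) s : 0 <= s -> hb b s <= s / 4.
Proof.
move=> s0; rewrite /hb invfM mulrA ler_piMr ?divr_ge0 //.
by rewrite invf_le1 ?ltr0n // ler1n.
Qed.

Lemma Eb_lb {R : realType} (b : R -> nat -> R) r : lbound (Eb b r) 0.
Proof.
move=> _ [s /= s0 <-]; rewrite addr_ge0 ?hb_ge0 // divr_ge0 //.
Qed.

Lemma Eb_n0 {R : realType} (b : R -> nat -> R) r : Eb b r !=set0.
Proof. exists (hb b 0 + `|r - 0| / 2); exists 0 => //=. Qed.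

Lemma eps_le {R : realType} (b : R -> nat -> R) r s : 0 <= s ->
  eps b r <= hb b s + `|r - s| / 2.
Proof.
move=> s0; have hl : has_lbound (Eb b r) by exists 0; exact: Eb_lb.
by apply: (ge_inf hl); exists s.
Qed.

Lemma eps_ge0 {R : realType} (b : R -> nat -> R) r : 0 <= eps b r.
Proof. rewrite /eps. have := lb_le_inf (Eb_n0 b r) (@Eb_lb _ b r). by [].
Qed.

Lemma eps_lip {R : realType} (b : R -> nat -> R) r1 r2 :
  eps b r1 <= eps b r2 + `|r1 - r2| / 2.
Proof.
rewrite -lerBlDr /eps; apply: lb_le_inf (Eb_n0 b r2) _ => _ [s /= s0 <-].
rewrite lerBlDr; apply: le_trans (@eps_le _ b r1 s s0) _.
rewrite -addrA lerD2l -mulrDl ler_pM2r ?invr_gt0 ?ltr0n //.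
rewrite (le_trans _ (ler_normD _ _)) //.
by have -> : r2 - s + (r1 - r2) = r1 - s by ring.
Qed.

Lemma eps_lip2 {R : realType} (b : R -> nat -> R) r1 r2 :
  `|eps b r1 - eps b r2| <= `|r1 - r2| / 2.
Proof.
have h1 := @eps_lip _ b r1 r2; have h2 := @eps_lip _ b r2 r1.
rewrite distrC in h2; rewrite ler_norml; apply/andP; split; lra.
Qed.

Lemma eps_le_id {R : realType} (b : R -> nat -> R) r : 0 <= r -> eps b r <= r / 4.
Proof. by move=> r0; apply: le_trans (@eps_le _ b r r r0) _; rewrite subrr normr0 mul0r addr0 hb_le. Qed.

Lemma eps0 {R : realType} (b : R -> nat -> R) : eps b 0 = 0.
Proof. by apply/le_anti; rewrite eps_ge0 andbT; apply: le_trans (eps_le_id _ (lexx _)) _; rewrite mul0r. Qed.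

Lemma Nb_spec {R : realType} (b : R -> nat -> R) z : classKL b -> 0 < z ->
  b (8 * z) (Nb b z) <= z / 2 /\ forall n, b (8 * z) n <= z / 2 -> (Nb b z <= n)%N.
Proof.
move=> Hb z0; apply: nminP; apply: KL_ex => //; first by rewrite mulr_ge0 // ltW.
by rewrite divr_gt0.
Qed.

Lemma n0_spec {R : realType} (b : R -> nat -> R) L : classKL b -> 0 < L ->
  b (8 * L) (n0 b L) <= L /\ forall n, b (8 * L) n <= L -> (n0 b L <= n)%N.
Proof.
move=> Hb L0; apply: nminP; apply: KL_ex => //; by rewrite mulr_ge0 // ltW.
Qed.

Lemma Nb_ge_n0 {R : realType} (b : R -> nat -> R) L z : classKL b -> 0 < L ->
  L <= z -> z <= 2 * L -> (n0 b L <= Nb b z)%N.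
Proof.
move=> Hb L0 Lz z2L; have z0 : 0 < z by apply: lt_le_trans Lz.
have [h1 _] := Nb_spec Hb z0; have [_ h2] := n0_spec Hb L0; apply: h2.
apply: le_trans _ (le_trans h1 _); last by lra.
apply: K_mono (KL_K _ Hb) _ _; lra.
Qed.

Lemma eps_small {R : realType} (b : R -> nat -> R) L z : classKL b -> 0 < L ->
  L <= z -> z <= 2 * L -> eps b z <= L / (2 * (n0 b L).+1%:R).
Proof.
move=> Hb L0 Lz z2L; have z0 : 0 < z by apply: lt_le_trans Lz.
apply: le_trans (@eps_le _ b z z (ltW z0)) _.
rewrite subrr normr0 mul0r addr0 /hb.
have hN : (n0 b L).+1%:R <= (Nb b z).+1%:R :> R.
  by rewrite ler_nat ltnS; exact: Nb_ge_n0.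
set N := (Nb b z).+1%:R in hN *; set M := (n0 b L).+1%:R in hN *.
have M1 : 1 <= M by rewrite /M ler1n.
rewrite ler_pdivrMr ?mulr_gt0 //; try lra.
rewrite mulrAC ler_pdivlMr ?mulr_gt0 //; try lra.
nra.
Qed.

Lemma eps_lb {R : realType} (b : R -> nat -> R) e X : classKL b -> 0 < e -> e <= X ->
  exists2 d, 0 < d & forall r, e <= r -> r <= X -> d <= eps b r.
Proof.
move=> Hb e0 eX.
have [hK _] := @nminP (fun n => b (16 * X) n <= e / 4)
  (KL_ex Hb (ltac:(lra) : 0 <= 16 * X) (ltac:(lra) : 0 < e / 4)).
set K := nmin _ in hK.
have K1 : 1 <= K.+1%:R :> R by rewrite ler1n.
exists (Num.min (e / 4) (e / (8 * K.+1%:R))).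
  by rewrite lt_min; apply/andP; split; [lra | rewrite divr_gt0 // mulr_gt0 //; lra].
move=> r er rX; rewrite /eps; apply: lb_le_inf (Eb_n0 b r) _ => _ [s /= s0 <-].
have hs0 := hb_ge0 b s0.
case: (leP (r / 2) `|r - s|) => h.
  by rewrite ge_min; apply/orP; left; lra.
move: h; rewrite ltr_norml => /andP[h1 h2].
have sN : (Nb b s <= K)%N.
  have [_ hmin] := Nb_spec Hb (ltac:(lra) : 0 < s); apply: hmin.
  have : b (8 * s) K <= b (16 * X) K by apply: K_mono (KL_K K Hb) _ _; lra.
  lra.
have hN : (Nb b s).+1%:R <= K.+1%:R :> R by rewrite ler_nat ltnS.
have hh : e / (8 * K.+1%:R) <= hb b s.
  rewrite /hb; set N := (Nb b s).+1%:R in hN *; set M := K.+1%:R in hN K1 *.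
  have N1 : 1 <= N by rewrite /N ler1n.
  rewrite ler_pdivlMr ?mulr_gt0 //; try lra.
  rewrite mulrAC ler_pdivrMr ?mulr_gt0 //; try lra.
  have p1 : 0 <= (2 * s - e) * N by apply: mulr_ge0; lra.
  have p2 : 0 <= s * (M - N) by apply: mulr_ge0; lra.
  nra.
rewrite ge_min; apply/orP; right.
by apply: le_trans hh _; rewrite lerDl divr_ge0.
Qed.

Lemma rho_lt {R : realType} (b : R -> nat -> R) r1 r2 : r1 < r2 -> rho b r1 < rho b r2.
Proof.
move=> h; have := @eps_lip _ b r2 r1; rewrite gtr0_norm ?subr_gt0 // /rho => h2; lra.
Qed.

Lemma rho_le {R : realType} (b : R -> nat -> R) r1 r2 : r1 <= r2 -> rho b r1 <= rho b r2.
Proof. by rewrite le_eqVlt => /orP[/eqP->//|h]; apply/ltW/rho_lt. Qed.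

Lemma rho_le_id {R : realType} (b : R -> nat -> R) r : rho b r <= r.
Proof. by rewrite /rho lerBlDr lerDl eps_ge0. Qed.

Lemma rho_ge {R : realType} (b : R -> nat -> R) r : 0 <= r -> r * 3 / 4 <= rho b r.
Proof. move=> r0; have := @eps_le_id _ b r r0; rewrite /rho; lra. Qed.

Lemma rho0 {R : realType} (b : R -> nat -> R) : rho b 0 = 0.
Proof. by rewrite /rho eps0 subr0. Qed.

Lemma iter_rho_lt {R : realType} (b : R -> nat -> R) n x y : x < y ->
  iter n (rho b) x < iter n (rho b) y.
Proof. by move=> h; elim: n => //= n IH; apply: rho_lt. Qed.

Lemma iter_rho_le {R : realType} (b : R -> nat -> R) n x y : x <= y ->
  iter n (rho b) x <= iter n (rho b) y.
Proof. by move=> h; elim: n => //= n IH; apply: rho_le. Qed.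

Lemma iter_rho0 {R : realType} (b : R -> nat -> R) n : iter n (rho b) 0 = 0.
Proof. by elim: n => //= n ->; rewrite rho0. Qed.

Lemma iter_rho_ge0 {R : realType} (b : R -> nat -> R) n x : 0 <= x -> 0 <= iter n (rho b) x.
Proof. by move=> x0; rewrite -(iter_rho0 b n); apply: iter_rho_le. Qed.

Lemma iter_rho_le_id {R : realType} (b : R -> nat -> R) n x : iter n (rho b) x <= x.
Proof. by elim: n => //= n IH; apply: le_trans (rho_le_id _ _) IH. Qed.

Lemma iter_rho_dec {R : realType} (b : R -> nat -> R) m n x : (m <= n)%N ->
  iter n (rho b) x <= iter m (rho b) x.
Proof. by move=> /subnK <-; rewrite iterD iter_rho_le_id. Qed.

Lemma key2 {R : realType} (b : R -> nat -> R) L : classKL b -> 0 < L ->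
  L <= iter (n0 b L).+1 (rho b) (2 * L).
Proof.
move=> Hb L0; set m := (n0 b L).+1.
have m0 : 0 < m%:R :> R by rewrite ltr0n.
set d := L / (2 * m%:R).
have md : m%:R * d = L / 2 by rewrite /d; field; rewrite pnatr_eq0.
have d0 : 0 <= d by rewrite /d divr_ge0 // ?mulr_ge0 // ltW.
suff H : forall i, (i <= m)%N -> 2 * L - i%:R * d <= iter i (rho b) (2 * L).
  by have := H m (leqnn m); lra.
elim=> [|i IH] im; first by rewrite mul0r subr0.
have im' : (i <= m)%N by apply: ltnW.
have := IH im'; set z := iter i _ _ => hz.
have hi : i%:R * d <= L / 2.
  by rewrite -md ler_wpM2r // ler_nat.
have hz2 : z <= 2 * L by apply: iter_rho_le_id.
have he := @eps_small _ b L z Hb L0 ltac:(lra) hz2.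
rewrite -/d in he; rewrite iterS -/z /rho -nat1r mulrDl mul1r; lra.
Qed.

Lemma key {R : realType} (b : R -> nat -> R) L k : classKL b -> 0 <= L ->
  exists m, ((k <= m)%N \/ ((0 < m)%N /\ b (4 * L) m <= 2 * L)) /\
            forall y, iter m (rho b) y <= L -> y <= 2 * L.
Proof.
move=> Hb; rewrite le_eqVlt => /orP[/eqP<-|L0].
  exists k; split; first by left.
  move=> y hy; rewrite mulr0 leNgt; apply/negP => y0.
  by have := @iter_rho_lt _ b k _ _ y0; rewrite iter_rho0; lra.
exists (n0 b L).+1; split.
  right; split => //.
  have [h1 _] := n0_spec Hb L0.
  have : b (4 * L) (n0 b L).+1 <= b (8 * L) (n0 b L).+1.
    by apply: K_mono (KL_K _ Hb) _ _; lra.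
  have : b (8 * L) (n0 b L).+1 <= b (8 * L) (n0 b L).
    by apply: KL_dec => //; lra.
  lra.
move=> y hy; rewrite leNgt; apply/negP => y0.
have := @iter_rho_lt _ b (n0 b L).+1 _ _ y0; have := key2 Hb L0; lra.
Qed.

Lemma rho_cont {R : realType} (b : R -> nat -> R) : continuous (rho b).
Proof.
move=> x; apply/cvgrPdist_lt => e e0.
have /cvgr_dist_lt/(_ (e / 2) ltac:(lra)) := @cvg_id _ (nbhs x).
apply: filterS => t /= h.
have := @eps_lip2 _ b x t.
rewrite /rho.
have -> : x - eps b x - (t - eps b t) = (x - t) - (eps b x - eps b t) by ring.
move=> h2; apply: le_lt_trans (ler_normB _ _) _; lra.
Qed.

Lemma iter_rho_cont {R : realType} (b : R -> nat -> R) n : continuous (iter n (rho b)).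
Proof.
elim: n => [|n IH] x; first exact: cvg_id.
have := @continuous_comp _ _ _ (iter n (rho b)) (rho b) x (IH x) (@rho_cont _ b _).
by [].
Qed.

Lemma iter_rho_cvg {R : realType} (b : R -> nat -> R) x : classKL b -> 0 <= x ->
  (fun n => iter n (rho b) x) @ \oo --> (0 : R).
Proof.
move=> Hb x0; apply/cvgr0Pnorm_lt => e e0.
suff [T hT] : exists T, iter T (rho b) x < e.
  exists T => // t /= Tt; rewrite ger0_norm ?iter_rho_ge0 //.
  exact: le_lt_trans (iter_rho_dec _ _ Tt) hT.
case: (ltP x e) => xe; first by exists 0%N.
have [d d0 hd] := eps_lb Hb e0 xe.
have x0' : 0 <= x / d by rewrite divr_ge0 // ltW.
exists (Num.Def.archi_bound (x / d)).
set T := Num.Def.archi_bound _.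
have hT : x < T%:R * d by rewrite -ltr_pdivrMr //; exact: archi_boundP.
rewrite ltNge; apply/negP => eT.
suff H : forall i, (i <= T)%N -> iter i (rho b) x <= x - i%:R * d.
  by have := H T (leqnn T); have := iter_rho_ge0 b T x0; lra.
elim=> [|i IH] iT; first by rewrite mul0r subr0.
have := IH (ltnW iT); set z := iter i _ _ => hz.
have ez : e <= z by apply: le_trans eT (iter_rho_dec _ _ (ltnW iT)).
have := hd z ez (iter_rho_le_id _ _ _).
rewrite iterS -/z /rho -nat1r mulrDl mul1r; lra.
Qed.

Lemma cvg_max_gen {R : realType} {T : Type} {F : set_system T} {FF : Filter F}
  (f g : T -> R) a c : f @ F --> a -> g @ F --> c ->
  (fun x => Num.max (f x) (g x)) @ F --> Num.max a c.
Proof.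
move=> hf hg; rewrite maxr_absE.
under eq_fun => ? do rewrite maxr_absE.
apply: cvgM; [|exact: cvg_cst]; apply: cvgD; first exact: cvgD.
by apply: cvg_norm; apply: cvgB.
Qed.

Lemma Kmax {R : realType} (f g : R -> R) : classK f -> classK g ->
  classK (fun r => Num.max (f r) (g r)).
Proof.
move=> Kf Kg; split.
- case: Kf => /subspace_continuousP cf _ _; case: Kg => /subspace_continuousP cg _ _.
  apply/subspace_continuousP => x Ax; exact: cvg_max_gen (cf x Ax) (cg x Ax).
- move=> r s r0 rs; rewrite gt_max !lt_max (K_lt Kf r0 rs) (K_lt Kg r0 rs).
  by rewrite orbT.
- by case: Kf => _ _ ->; case: Kg => _ _ ->; rewrite maxxx.
Qed.

Lemma Kid {R : realType} : classK (fun r : R => r).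
Proof.
split => //; apply/subspace_continuousP => x Ax; exact: cvg_within.
Qed.

Lemma Kiter {R : realType} (b : R -> nat -> R) (G : R -> R) t : classK G ->
  classK (fun r => 2 * iter t (rho b) (G r)).
Proof.
move=> KG; split.
- case: KG => /subspace_continuousP cG _ _.
  apply/subspace_continuousP => x Ax.
  apply: (@continuous_cvg _ _ _ _ _ G (fun y => 2 * iter t (rho b) y)) (cG x Ax).
  apply: cvgMr; exact: iter_rho_cont.
- move=> r s r0 rs; rewrite ltr_pM2l //; apply: iter_rho_lt; exact: K_lt KG r0 rs.
- by case: KG => _ _ ->; rewrite iter_rho0 mulr0.
Qed.

Lemma KLiter {R : realType} (b : R -> nat -> R) (G : R -> R) : classKL b -> classK G ->
  classKL (fun r t => 2 * iter t (rho b) (G r)).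
Proof.
move=> Hb KG; split.
- move=> t; exact: Kiter.
- move=> r r0 k; rewrite ler_pM2l //; exact: iter_rho_dec.
- move=> r r0; rewrite -(mulr0 2); apply: cvgMr; apply: iter_rho_cvg => //.
  exact: K_ge0.
Qed.

Lemma bigmax_ge0 {R : realType} n (F : nat -> R) : 0 <= \big[Num.max/0]_(i < n) F i.
Proof. by elim/big_rec: _ => // i y _ y0; rewrite le_max y0 orbT. Qed.

Lemma bigmax_leX {R : realType} n (F : nat -> R) X : 0 <= X ->
  (forall i, (i < n)%N -> F i <= X) -> \big[Num.max/0]_(i < n) F i <= X.
Proof. by move=> X0 H; apply: bigmax_le => // i _; apply: H. Qed.

Lemma le_bigmaxX {R : realType} n (F : nat -> R) j : (j < n)%N ->
  F j <= \big[Num.max/0]_(i < n) F i.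
Proof. by move=> jn; have := le_bigmax 0 (fun i : 'I_n => F i) (Ordinal jn). Qed.

Lemma K_bigmax {R : realType} (g : R -> R) n (P : nat -> R) X : classK g -> 0 <= X ->
  (forall i, 0 <= P i) -> (forall i, (i < n)%N -> g (P i) <= X) ->
  g (\big[Num.max/0]_(i < n) P i) <= X.
Proof.
move=> Kg X0 P0 H.
suff : g (\big[Num.max/0]_(i < n) P i) <= X /\ 0 <= \big[Num.max/0]_(i < n) P i by case.
elim/big_rec: _ => [|i y _ [h1 h2]]; first by case: Kg => _ _ ->.
have h3 := H i (ltn_ord i).
case: (leP (P i) y) => _; split => //; exact: P0.
Qed.

Lemma main_seq {R : realType} (b : R -> nat -> R) (gv gy : R -> R) (a p q : nat -> R) :
  classKL b -> classK gv -> classK gy ->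
  (forall i, 0 <= a i) -> (forall i, 0 <= p i) -> (forall i, 0 <= q i) ->
  (forall s n, a (s + n)%N <= Num.max (b (a s) n)
      (Num.max (gv (\big[Num.max/0]_(i < n) p (s + i)%N))
               (gy (\big[Num.max/0]_(i < n) q (s + i)%N)))) ->
  forall k, a k <=
    Num.max (\big[Num.max/0]_(j < k) (2 * iter (k - j - 1)%N (rho b) (Num.max (gv (p j)) (gy (p j)))))
      (Num.max (2 * iter k (rho b) (Num.max (a 0%N) (b (a 0%N) 0%N)))
               (\big[Num.max/0]_(j < k) (2 * iter (k - j - 1)%N (rho b) (Num.max (gv (q j)) (gy (q j)))))).
Proof.
move=> Hb Kv Ky a0 p0 q0 HP.
set G := fun r => Num.max (gv r) (gy r).
set b0 := Num.max (a 0%N) (b (a 0%N) 0%N).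
have b00 : 0 <= b0 by rewrite le_max a0.
elim/ltn_ind => k IH.
set L := Num.max _ _.
have hA : 2 * iter k (rho b) b0 <= L by rewrite /L !le_max lexx !orbT.
have hB : forall j, (j < k)%N -> 2 * iter (k - j - 1)%N (rho b) (G (p j)) <= L.
  move=> j jk; rewrite /L le_max; apply/orP; left.
  exact: (@le_bigmaxX _ k (fun j => 2 * iter (k - j - 1)%N (rho b) (G (p j))) j jk).
have hC : forall j, (j < k)%N -> 2 * iter (k - j - 1)%N (rho b) (G (q j)) <= L.
  move=> j jk; rewrite /L le_max; apply/orP; right; rewrite le_max; apply/orP; right.
  exact: (@le_bigmaxX _ k (fun j => 2 * iter (k - j - 1)%N (rho b) (G (q j))) j jk).
have L0 : 0 <= L by apply: le_trans hA; rewrite mulr_ge0 // iter_rho_ge0.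
have [m [hm hy]] := key k Hb (ltac:(lra) : 0 <= L / 2).
have hh : forall x t, (t <= m)%N -> 2 * iter t (rho b) x <= L -> x <= L.
  move=> x t tm h; have := hy x; have := @iter_rho_dec _ b t m x tm; lra.
have Gv : forall r, gv r <= G r by move=> r; rewrite /G le_max lexx.
have Gy : forall r, gy r <= G r by move=> r; rewrite /G le_max lexx orbT.
case: (leqP k m) => km.
  have := HP 0%N k; rewrite add0n => h; apply: le_trans h _.
  rewrite !ge_max; apply/and3P; split.
  - apply: le_trans (@KL_dec _ b (a 0%N) 0%N k Hb (a0 _) (leq0n k)) _.
    apply: le_trans (hh _ _ km hA); rewrite /b0 le_max lexx orbT //.
  - apply: (@K_bigmax _ gv k (fun i => p (0 + i)%N)) => // i ik; apply: le_trans (Gv _) _.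
    apply: hh _ (k - i - 1)%N _ (hB i ik); lia.
  - apply: (@K_bigmax _ gy k (fun i => q (0 + i)%N)) => // i ik; apply: le_trans (Gy _) _.
    apply: hh _ (k - i - 1)%N _ (hC i ik); lia.
case: hm => [km'|[m0 hbm]]; first by lia.
set s := (k - m)%N.
have ks : k = (s + m)%N by rewrite /s subnK // ltnW.
have sk : (s < k)%N by lia.
have hys : forall x n, iter (m + n)%N (rho b) x <= L / 2 -> 2 * iter n (rho b) x <= 2 * L.
  by move=> x n; rewrite iterD => /hy; lra.
have hWs : a s <= 2 * L.
  apply: le_trans (IH s sk) _; rewrite !ge_max; apply/and3P; split.
  - apply: (@bigmax_leX _ s (fun j => 2 * iter (s - j - 1)%N (rho b) (G (p j)))); first lra.
    move=> j js; apply: hys; have := hB j (ltn_trans js sk).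
    have -> : (k - j - 1 = m + (s - j - 1))%N by lia. lra.
  - apply: hys; rewrite addnC -ks; lra.
  - apply: (@bigmax_leX _ s (fun j => 2 * iter (s - j - 1)%N (rho b) (G (q j)))); first lra.
    move=> j js; apply: hys; have := hC j (ltn_trans js sk).
    have -> : (k - j - 1 = m + (s - j - 1))%N by lia. lra.
have := HP s m; rewrite -ks => h; apply: le_trans h _.
rewrite !ge_max; apply/and3P; split.
- apply: le_trans (K_mono (KL_K m Hb) (a0 s) (_ : a s <= 4 * (L / 2))) _; lra.
- apply: (@K_bigmax _ gv m (fun i => p (s + i)%N)) => // i im; apply: le_trans (Gv _) _.
  apply: hh _ (k - (s + i) - 1)%N _ (hB (s + i)%N _); lia.
- apply: (@K_bigmax _ gy m (fun i => q (s + i)%N)) => // i im; apply: le_trans (Gy _) _.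
  apply: hh _ (k - (s + i) - 1)%N _ (hC (s + i)%N _); lia.
Qed.

Lemma traj_shift {X U W V Y : Type}
  (XX : set X) (UU : set U) (WW : set W) (VV : set V) (YY : set Y)
  (F : X -> U -> W -> V -> X) (H : X -> U -> W -> V -> Y)
  (x : nat -> X) (u : nat -> U) (w : nat -> W) (v : nat -> V) (y : nat -> Y) s :
  is_traj XX UU WW VV YY F H x u w v y ->
  is_traj XX UU WW VV YY F H (fun i => x (s + i)%N) (fun i => u (s + i)%N)
    (fun i => w (s + i)%N) (fun i => v (s + i)%N) (fun i => y (s + i)%N).
Proof. by move=> T i; have := T (s + i)%N; rewrite /= addnS. Qed.

Lemma max3 {R : realType} (a a' b c c' : R) : a <= a' -> c <= c' ->
  Num.max a (Num.max b c) <= Num.max b (Num.max a' c').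
Proof. by move=> h1 h2; rewrite !ge_max !le_max h1 h2 lexx !orbT. Qed.

Unset Implicit Arguments.

Theorem proposition2 (R : realType) (X V Y : normedModType R) (U W : Type)
  (XX : set X) (UU : set U) (WW : set W) (VV : set V) (YY : set Y)
  (F : X -> U -> W -> V -> X) (H : X -> U -> W -> V -> Y) :
  (exists (g0 : R -> nat -> R) (gv gy : R -> R),
     [/\ classKL g0, classK gv, classK gy &
       forall (x xt : nat -> X) (u : nat -> U) (w wt : nat -> W)
              (v vt : nat -> V) (y yt : nat -> Y),
         is_traj XX UU WW VV YY F H x u w v y ->
         is_traj XX UU WW VV YY F H xt u wt vt yt ->
         forall k : nat,
           `|x k - xt k| <=
             Num.max (g0 `|x 0 - xt 0| k)
               (Num.max (gv (supnorm (fun j => v j - vt j) k))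
                        (gy (supnorm (fun j => y j - yt j) k)))])
  <->
  (exists (g0 gv gy : R -> nat -> R),
     [/\ classKL g0, classKL gv, classKL gy &
       forall (x xt : nat -> X) (u : nat -> U) (w wt : nat -> W)
              (v vt : nat -> V) (y yt : nat -> Y),
         is_traj XX UU WW VV YY F H x u w v y ->
         is_traj XX UU WW VV YY F H xt u wt vt yt ->
         forall k : nat,
           `|x k - xt k| <=
             Num.max (\big[Num.max/0]_(j < k) gv `|v j - vt j| (k - j - 1)%N)
               (Num.max (g0 `|x 0 - xt 0| k)
                        (\big[Num.max/0]_(j < k) gy `|y j - yt j| (k - j - 1)%N))]).
Proof.
split.
- move=> [g0 [gv [gy [Hb Kv Ky Hbd]]]].
  exists (fun r k => 2 * iter k (rho g0) (Num.max r (g0 r 0%N))).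
  exists (fun r t => 2 * iter t (rho g0) (Num.max (gv r) (gy r))).
  exists (fun r t => 2 * iter t (rho g0) (Num.max (gv r) (gy r))).
  split.
  + apply: (KLiter Hb); apply: Kmax; [exact: Kid | exact: KL_K 0%N Hb].
  + exact: KLiter Hb (Kmax Kv Ky).
  + exact: KLiter Hb (Kmax Kv Ky).
  move=> x xt u w wt v vt y yt Tx Txt k.
  apply: (@main_seq R g0 gv gy (fun i => `|x i - xt i|) (fun j => `|v j - vt j|)
            (fun j => `|y j - yt j|) Hb Kv Ky) => // s n.
  have := Hbd _ _ _ _ _ _ _ _ _ (traj_shift s Tx) (traj_shift s Txt) n.
  by rewrite /supnorm /= addn0.
- move=> [g0 [gv [gy [H0 Hv Hy Hbd]]]].
  exists g0, (fun r => gv r 0%N), (fun r => gy r 0%N); split => //.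
  + exact: KL_K 0%N Hv.
  + exact: KL_K 0%N Hy.
  move=> x xt u w wt v vt y yt Tx Txt k.
  apply: le_trans (Hbd _ _ _ _ _ _ _ _ _ Tx Txt k) _.
  have gen : forall (g : R -> nat -> R) (z : nat -> R), classKL g -> (forall i, 0 <= z i) ->
      \big[Num.max/0]_(j < k) g (z j) (k - j - 1)%N <= g (\big[Num.max/0]_(i < k) z i) 0%N.
    move=> g z Kg z0.
    have S0 := @bigmax_ge0 R k z.
    apply: (@bigmax_leX _ k (fun j => g (z j) (k - j - 1)%N)).
      by apply: K_ge0 (KL_K 0%N Kg) S0.
    move=> j jk; apply: le_trans (KL_dec Kg (z0 j) (leq0n _)) _.
    apply: K_mono (KL_K 0%N Kg) (z0 j) _; exact: le_bigmaxX.
  apply: max3.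
  + exact: (gen gv (fun j => `|v j - vt j|)).
  + exact: (gen gy (fun j => `|y j - yt j|)).
Qed.
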